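(* Let $(H,R)$ be a semiquasitriangular Hopf algebra. For each $h\in H$, $(\mathrm{id}_H\otimes\Delta)(\nu(h))\in H\otimes\operatorname{Z}(H)\otimes H$.
   Context: All vector spaces are over a field $k$, $\otimes=\otimes_k$. For a Hopf algebra $H$ with comultiplication $\Delta$, counit $\epsilon$, antipode $S$, we use Sweedler notation $\Delta(h)=h_1\otimes h_2$, etc. $\operatorname{Z}(H)$ is the centre of $H$. For $R\in H\otimes H$ we write $R=R^{(1)}\otimes R^{(2)}$ (summation understood); $R'^{(1)}\otimes R'^{(2)}$ denotes another copy of $R$. Definition (semiquasitriangular Hopf algebra): a pair $(H,R)$ with $H$ a Hopf algebra with bijective antipode and $R\in H\otimes H$ invertible such that (1) $R^{(1)}_1\otimes R^{(1)}_2\otimes R^{(2)} = R^{(1)}\otimes R'^{(1)}\otimes R^{(2)}R'^{(2)}$; (2) $R^{(1)}\otimes R^{(2)}_1\otimes R^{(2)}_2 = R^{(1)}R'^{(1)}\otimes R'^{(2)}\otimes R^{(2)}$; (3) $R^{(1)}\otimes R^{(2)}_2R'^{(1)}\otimes R^{(2)}_1R'^{(2)} = R^{(1)}\otimes R'^{(1)}R^{(2)}_1\otimes R'^{(2)}R^{(2)}_2$; (4) $R^{(1)}_2R'^{(1)}\otimes R^{(1)}_1R'^{(2)}\otimes R^{(2)} = R'^{(1)}R^{(1)}_1\otimes R'^{(2)}R^{(1)}_2\otimes R^{(2)}$; (5) $\nu(h):=R^{(2)}h_2R'^{(2)}\otimes S(h_1)S(R^{(1)})h_3R'^{(1)}\in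 H\otimes\operatorname{Z}(H)$ for all $h\in H$; (6) $\nu(h)=R^{(1)}h_2R'^{(1)}\otimes S(R'^{(2)})S(h_1)R^{(2)}h_3$ for all $h\in H$. The map $\nu$ in the claim is the one defined in (5). *)

(* Defs.v *)
From HB Require Import structures.
From mathcomp Require Import all_boot all_order all_algebra.
Set Implicit Arguments. Unset Strict Implicit. Unset Printing Implicit Defensive.
Import GRing.Theory.
Local Open Scope ring_scope.

Section Tensor.
Variable k : fieldType.

Section T2.
Variables U V : lmodType k.

Inductive tstep2 : seq (U * V) -> seq (U * V) -> Prop :=
| ts2_addl a a' b : tstep2 [:: (a + a', b)] [:: (a, b); (a', b)]
| ts2_addr a b b' : tstep2 [:: (a, b + b')] [:: (a, b); (a, b')]
| ts2_scal (c : k) a b : tstep2 [:: (c *: a, b)] [:: (a, c *: b)]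
| ts2_zero b : tstep2 [:: (0, b)] [::].

(* the congruence they generate: equality in U (x) V *)
Inductive teq2 : seq (U * V) -> seq (U * V) -> Prop :=
| te2_step s1 x y s2 : tstep2 x y -> teq2 (s1 ++ x ++ s2) (s1 ++ y ++ s2)
| te2_perm x y : perm_eq x y -> teq2 x y
| te2_sym x y : teq2 x y -> teq2 y x
| te2_trans x y z : teq2 x y -> teq2 y z -> teq2 x z.

Definition in_tensor2_l (A : U -> Prop) (t : seq (U * V)) : Prop :=
  exists t' : seq (U * V), (forall p, p \in t' -> A p.1) /\ teq2 t t'.
Definition in_tensor2_r (B : V -> Prop) (t : seq (U * V)) : Prop :=
  exists t' : seq (U * V), (forall p, p \in t' -> B p.2) /\ teq2 t t'.
End T2.

Section T3.
Variables U V W : lmodType k.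

Inductive tstep3 : seq (U * V * W) -> seq (U * V * W) -> Prop :=
| ts3_add1 a a' b c : tstep3 [:: (a + a', b, c)] [:: (a, b, c); (a', b, c)]
| ts3_add2 a b b' c : tstep3 [:: (a, b + b', c)] [:: (a, b, c); (a, b', c)]
| ts3_add3 a b c c' : tstep3 [:: (a, b, c + c')] [:: (a, b, c); (a, b, c')]
| ts3_scal2 (x : k) a b c : tstep3 [:: (x *: a, b, c)] [:: (a, x *: b, c)]
| ts3_scal3 (x : k) a b c : tstep3 [:: (x *: a, b, c)] [:: (a, b, x *: c)]
| ts3_zero b c : tstep3 [:: (0, b, c)] [::].

Inductive teq3 : seq (U * V * W) -> seq (U * V * W) -> Prop :=
| te3_step s1 x y s2 : tstep3 x y -> teq3 (s1 ++ x ++ s2) (s1 ++ y ++ s2)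
| te3_perm x y : perm_eq x y -> teq3 x y
| te3_sym x y : teq3 x y -> teq3 y x
| te3_trans x y z : teq3 x y -> teq3 y z -> teq3 x z.

Definition in_tensor3_mid (B : V -> Prop) (t : seq (U * V * W)) : Prop :=
  exists t' : seq (U * V * W), (forall p, p \in t' -> B p.1.2) /\ teq3 t t'.
End T3.

Section Hopf.
Variable H : algType k.

Definition central (z : H) : Prop := forall y : H, z * y = y * z.

Definition tmul2 (x y : seq (H * H)) : seq (H * H) :=
  [seq (p.1 * q.1, p.2 * q.2) | p <- x, q <- y].

(* (Delta (x) id), (id (x) Delta) : H (x) H -> H (x) H (x) H *)
Definition Dl (D : H -> seq (H * H)) (t : seq (H * H)) : seq (H * H * H) :=
  flatten [seq [seq (q.1, q.2, p.2) | q <- D p.1] | p <- t].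
Definition Dr (D : H -> seq (H * H)) (t : seq (H * H)) : seq (H * H * H) :=
  flatten [seq [seq (p.1, q.1, q.2) | q <- D p.2] | p <- t].

(* h_1 (x) h_2 (x) h_3 := (Delta (x) id) Delta h *)
Definition D3 (D : H -> seq (H * H)) (h : H) : seq (H * H * H) := Dl D (D h).

Record is_hopf (D : H -> seq (H * H)) (eps : H -> k) (S : H -> H) : Prop := {
  D_add : forall a b, teq2 (D (a + b)) (D a ++ D b);
  D_scale : forall (c : k) a, teq2 (D (c *: a)) [seq (c *: p.1, p.2) | p <- D a];
  D_coass : forall h, teq3 (Dl D (D h)) (Dr D (D h));
  D_mul : forall a b, teq2 (D (a * b)) (tmul2 (D a) (D b));
  D_one : teq2 (D 1) [:: (1, 1)];
  eps_add : forall a b, eps (a + b) = eps a + eps b;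
  eps_scale : forall (c : k) a, eps (c *: a) = c * eps a;
  eps_mul : forall a b, eps (a * b) = eps a * eps b;
  eps_one : eps 1 = 1;
  counit_l : forall h, \sum_(p <- D h) eps p.1 *: p.2 = h;
  counit_r : forall h, \sum_(p <- D h) eps p.2 *: p.1 = h;
  S_add : forall a b, S (a + b) = S a + S b;
  S_scale : forall (c : k) a, S (c *: a) = c *: S a;
  antipode_l : forall h, \sum_(p <- D h) S p.1 * p.2 = eps h *: 1;
  antipode_r : forall h, \sum_(p <- D h) p.1 * S p.2 = eps h *: 1
}.

(* nu(h) = R^(2) h_2 R'^(2) (x) S(h_1) S(R^(1)) h_3 R'^(1) *)
Definition nu (S : H -> H) (D : H -> seq (H * H)) (R : seq (H * H)) (h : H)
  : seq (H * H) :=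
  flatten [seq [seq (r.2 * x.1.2 * r'.2, S x.1.1 * S r.1 * x.2 * r'.1)
                  | x <- D3 D h, r' <- R] | r <- R].

Definition nu6 (S : H -> H) (D : H -> seq (H * H)) (R : seq (H * H)) (h : H)
  : seq (H * H) :=
  flatten [seq [seq (r.1 * x.1.2 * r'.1, S r'.2 * S x.1.1 * r.2 * x.2)
                  | x <- D3 D h, r' <- R] | r <- R].

Record is_semiqt (D : H -> seq (H * H)) (eps : H -> k) (S : H -> H)
    (R : seq (H * H)) : Prop := {
  sqt_hopf : is_hopf D eps S;
  sqt_Sbij : bijective S;
  sqt_inv : exists Ri : seq (H * H),
      teq2 (tmul2 R Ri) [:: (1, 1)] /\ teq2 (tmul2 Ri R) [:: (1, 1)];
  sqt1 : teq3 (Dl D R) [seq (r.1, r'.1, r.2 * r'.2) | r <- R, r' <- R];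
  sqt2 : teq3 (Dr D R) [seq (r.1 * r'.1, r'.2, r.2) | r <- R, r' <- R];
  sqt3 : teq3
    (flatten [seq [seq (r.1, d.2 * r'.1, d.1 * r'.2) | d <- D r.2, r' <- R] | r <- R])
    (flatten [seq [seq (r.1, r'.1 * d.1, r'.2 * d.2) | d <- D r.2, r' <- R] | r <- R]);
  sqt4 : teq3
    (flatten [seq [seq (d.2 * r'.1, d.1 * r'.2, r.2) | d <- D r.1, r' <- R] | r <- R])
    (flatten [seq [seq (r'.1 * d.1, r'.2 * d.2, r.2) | d <- D r.1, r' <- R] | r <- R]);
  sqt5 : forall h, in_tensor2_r central (nu S D R h);
  sqt6 : forall h, teq2 (nu S D R h) (nu6 S D R h)
}.
End Hopf.
End Tensor.

(* Main.v *)
From HB Require Import structures.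
Require Import Defs.
From mathcomp Require Import all_boot all_order all_algebra.
From mathcomp Require Import boolp.
Set Implicit Arguments. Unset Strict Implicit. Unset Printing Implicit Defensive.
Import GRing.Theory.
Local Open Scope ring_scope.

Section Q3.
Variables (k : fieldType) (H : algType k).
Notation T3 := (seq (H * H * H)).

Lemma teq3_refl (x : T3) : teq3 x x.
Proof. by apply: te3_perm. Qed.

Lemma teq3_catl (x x' y : T3) : teq3 x x' -> teq3 (x ++ y) (x' ++ y).
Proof.
elim=> [s1 a b s2 st|a b pab|a b _ IH|a b c _ IH1 _ IH2].
- by rewrite -!catA; apply: te3_step.
- by apply: te3_perm; rewrite perm_cat2r.
- exact: te3_sym.
- exact: te3_trans IH2.
Qed.

Lemma teq3_cat (x x' y y' : T3) : teq3 x x' -> teq3 y y' -> teq3 (x ++ y) (x' ++ y').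
Proof.
move=> hx hy; apply: te3_trans (teq3_catl y hx) _.
apply: (@te3_trans _ _ _ _ _ (y ++ x')); first by apply: te3_perm; rewrite perm_catC.
apply: te3_trans (teq3_catl x' hy) _; by apply: te3_perm; rewrite perm_catC.
Qed.

Definition Q := {P : T3 -> Prop | exists x, P = teq3 x}.
HB.instance Definition _ := gen_eqMixin Q.
HB.instance Definition _ := gen_choiceMixin Q.

Definition cls (x : T3) : Q := exist _ (teq3 x) (ex_intro _ x erefl).
Definition rep (q : Q) : T3 := proj1_sig (cid (proj2_sig q)).

Lemma cls_eq x y : teq3 x y -> cls x = cls y.
Proof.
move=> h; apply: eq_sig_hprop => [? ? ?|]; first exact: Prop_irrelevance.
rewrite /=; apply: funext => z; apply: propext; split => hz.
- exact: te3_trans (te3_sym h) hz.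
- exact: te3_trans h hz.
Qed.

Lemma cls_eqE x y : cls x = cls y -> teq3 x y.
Proof. move/(congr1 (@proj1_sig _ _)) => /= e; by rewrite e; apply: teq3_refl. Qed.

Lemma repK q : cls (rep q) = q.
Proof.
rewrite /rep; case: (cid _) => x /= e; apply: eq_sig_hprop => [? ? ?|]; first exact: Prop_irrelevance.
by rewrite /= e.
Qed.

Lemma rep_cls x : teq3 (rep (cls x)) x.
Proof. apply: cls_eqE; by rewrite repK. Qed.

Definition qadd (q q' : Q) : Q := cls (rep q ++ rep q').
Definition qzero : Q := cls [::].

Lemma cls_cat x y : cls (x ++ y) = qadd (cls x) (cls y).
Proof. apply: cls_eq; apply: teq3_cat; apply: te3_sym; exact: rep_cls. Qed.

Lemma clsP (q : Q) : exists x, q = cls x.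
Proof. by exists (rep q); rewrite repK. Qed.

Lemma qaddA : associative qadd.
Proof.
move=> a b c; case: (clsP a) => x ->; case: (clsP b) => y ->; case: (clsP c) => z ->.
by rewrite -!cls_cat catA.
Qed.
Lemma qaddC : commutative qadd.
Proof.
move=> a b; case: (clsP a) => x ->; case: (clsP b) => y ->.
by rewrite -!cls_cat; apply: cls_eq; apply: te3_perm; rewrite perm_catC.
Qed.
Lemma qadd0 : left_id qzero qadd.
Proof. move=> a; case: (clsP a) => [x ->]. by rewrite /qzero -cls_cat. Qed.

HB.instance Definition _ := GRing.isNmodule.Build Q qaddA qaddC qadd0.

Lemma cls_catE x y : cls (x ++ y) = cls x + cls y.
Proof. exact: cls_cat. Qed.

Definition t3 (a b c : H) : Q := cls [:: (a, b, c)].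

Lemma sum_t3 (x : T3) : \sum_(p <- x) t3 p.1.1 p.1.2 p.2 = cls x.
Proof.
elim: x => [|[[a b] c] x IH]; first by rewrite big_nil.
by rewrite big_cons IH /t3 -cls_catE.
Qed.

Lemma st3 (x y : T3) : tstep3 x y -> teq3 x y.
Proof. by move=> h; have := te3_step [::] [::] h; rewrite /= !cats0. Qed.

Lemma teq3_flat (F : H * H * H -> T3)
  (hF : forall x y, tstep3 x y -> teq3 (flatten (map F x)) (flatten (map F y))) x y :
  teq3 x y -> teq3 (flatten (map F x)) (flatten (map F y)).
Proof.
elim=> [s1 a b s2 st|a b pab|a b _ IH|a b c _ IH1 _ IH2].
- rewrite !map_cat !flatten_cat; apply: teq3_cat; first exact: teq3_refl.
  apply: teq3_cat; [exact: hF|exact: teq3_refl].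
- by apply: te3_perm; apply: perm_flatten; apply: perm_map.
- exact: te3_sym.
- exact: te3_trans IH2.
Qed.

Definition scf (c : k) (p : H * H * H) : H * H * H := (c *: p.1.1, p.1.2, p.2).

Lemma scf_teq c x y : teq3 x y -> teq3 (map (scf c) x) (map (scf c) y).
Proof.
have E z : map (scf c) z = flatten (map (fun p => [:: scf c p]) z).
  by elim: z => //= p z ->.
move=> h; rewrite !E; apply: teq3_flat h => {}x {}y [] /=.
- by move=> a a' b cc; rewrite /scf /= scalerDr; apply: st3; apply: ts3_add1.
- by move=> a b b' cc; apply: st3; apply: ts3_add2.
- by move=> a b cc cc'; apply: st3; apply: ts3_add3.
- move=> x0 a b cc; rewrite /scf /= scalerA mulrC -scalerA; apply: st3; apply: ts3_scal2.
- move=> x0 a b cc; rewrite /scf /= scalerA mulrC -scalerA; apply: st3; apply: ts3_scal3.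
- by move=> b cc; rewrite /scf /= scaler0; apply: st3; apply: ts3_zero.
Qed.

Lemma Q0 : (0 : Q) = cls [::].
Proof. by []. Qed.

Definition sc (c : k) (q : Q) : Q := cls (map (scf c) (rep q)).

Lemma sc_cls c x : sc c (cls x) = cls (map (scf c) x).
Proof. by apply: cls_eq; apply: scf_teq; apply: rep_cls. Qed.

Lemma scD c q q' : sc c (q + q') = sc c q + sc c q'.
Proof.
case: (clsP q) => x ->; case: (clsP q') => y ->.
by rewrite -cls_catE !sc_cls map_cat cls_catE.
Qed.

Lemma sc_zero c : sc c 0 = 0.
Proof. by rewrite Q0 sc_cls. Qed.

Lemma sc0 q : sc 0 q = 0.
Proof.
case: (clsP q) => x ->; rewrite sc_cls; elim: x => [//|[[a b] c] x IH].
rewrite /= -cat1s cls_catE IH addr0 /scf /= scale0r.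
by rewrite Q0; apply: cls_eq; apply: st3; apply: ts3_zero.
Qed.

Lemma scA c d q : sc c (sc d q) = sc (c * d) q.
Proof.
case: (clsP q) => x ->; rewrite !sc_cls -map_comp; congr cls; apply: eq_map => p.
by rewrite /scf /= scalerA.
Qed.

Lemma sc_sum I c (s : seq I) (F : I -> Q) : sc c (\sum_(i <- s) F i) = \sum_(i <- s) sc c (F i).
Proof. elim: s => [|i s IH]; first by rewrite !big_nil sc_zero. by rewrite !big_cons scD IH. Qed.

Lemma t3D1 a a' b c : t3 (a + a') b c = t3 a b c + t3 a' b c.
Proof. by rewrite /t3 -cls_catE; apply: cls_eq; apply: st3; apply: ts3_add1. Qed.
Lemma t3D2 a b b' c : t3 a (b + b') c = t3 a b c + t3 a b' c.
Proof. by rewrite /t3 -cls_catE; apply: cls_eq; apply: st3; apply: ts3_add2. Qed.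
Lemma t3D3 a b c c' : t3 a b (c + c') = t3 a b c + t3 a b c'.
Proof. by rewrite /t3 -cls_catE; apply: cls_eq; apply: st3; apply: ts3_add3. Qed.
Lemma t3Z1 x a b c : t3 (x *: a) b c = sc x (t3 a b c).
Proof. by rewrite /t3 sc_cls. Qed.
Lemma t3Z2 x a b c : t3 a (x *: b) c = sc x (t3 a b c).
Proof. by rewrite /t3 sc_cls; apply: cls_eq; apply: te3_sym; apply: st3; apply: ts3_scal2. Qed.
Lemma t3Z3 x a b c : t3 a b (x *: c) = sc x (t3 a b c).
Proof. by rewrite /t3 sc_cls; apply: cls_eq; apply: te3_sym; apply: st3; apply: ts3_scal3. Qed.

Definition hlin (f : H -> H) := (forall a b, f (a + b) = f a + f b) /\ (forall (c : k) a, f (c *: a) = c *: f a).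
Definition lin (f : H -> Q) := (forall a b, f (a + b) = f a + f b) /\ (forall c a, f (c *: a) = sc c (f a)).
Definition bil (G : H * H -> Q) := (forall b, lin (fun a => G (a, b))) /\ (forall a, lin (fun b => G (a, b))).
Definition tril (G : H * H * H -> Q) := [/\ (forall b c, lin (fun a => G (a, b, c))),
   (forall a c, lin (fun b => G (a, b, c))) & (forall a b, lin (fun c => G (a, b, c)))].

Lemma hlin_id : hlin (fun a => a).
Proof. by []. Qed.
Lemma hlin_mulr f y : hlin f -> hlin (fun a => f a * y).
Proof. by case=> h1 h2; split => *; rewrite ?h1 ?h2 ?mulrDl ?scalerAl. Qed.
Lemma hlin_mull f y : hlin f -> hlin (fun a => y * f a).
Proof. by case=> h1 h2; split => *; rewrite ?h1 ?h2 ?mulrDr ?scalerAr. Qed.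

Lemma lin0 f : lin f -> f 0 = 0.
Proof. by case=> _ h; rewrite -(scale0r 0) h sc0. Qed.
Lemma lin_sumE I f (s : seq I) F : lin f -> f (\sum_(i <- s) F i) = \sum_(i <- s) f (F i).
Proof.
move=> hf; elim: s => [|i s IH]; first by rewrite !big_nil lin0.
by rewrite !big_cons hf.1 IH.
Qed.
Lemma lin_sum I (s : seq I) (F : I -> H -> Q) : (forall i, lin (F i)) -> lin (fun a => \sum_(i <- s) F i a).
Proof.
move=> hF; split => *.
- by rewrite -big_split; apply: eq_bigr => i _; rewrite (hF i).1.
- by rewrite sc_sum; apply: eq_bigr => i _; rewrite (hF i).2.
Qed.
Lemma lin_comp F f : lin F -> hlin f -> lin (fun a => F (f a)).
Proof. by move=> [h1 h2] [g1 g2]; split => *; rewrite ?g1 ?g2 ?h1 ?h2. Qed.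
Lemma lin_sc F c : lin F -> lin (fun a => sc c (F a)).
Proof. by move=> [h1 h2]; split => *; rewrite ?h1 ?h2 ?scD ?scA // mulrC. Qed.
Lemma lin_add F G : lin F -> lin G -> lin (fun a => F a + G a).
Proof.
move=> [h1 h2] [g1 g2]; split => *; rewrite ?h1 ?h2 ?g1 ?g2 ?scD //.
by rewrite addrACA.
Qed.
Lemma lin_t3_1 f b c : hlin f -> lin (fun a => t3 (f a) b c).
Proof. by move=> [g1 g2]; split => *; rewrite ?g1 ?g2 ?t3D1 ?t3Z1. Qed.
Lemma lin_t3_2 f a c : hlin f -> lin (fun b => t3 a (f b) c).
Proof. by move=> [g1 g2]; split => *; rewrite ?g1 ?g2 ?t3D2 ?t3Z2. Qed.
Lemma lin_t3_3 f a b : hlin f -> lin (fun c => t3 a b (f c)).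
Proof. by move=> [g1 g2]; split => *; rewrite ?g1 ?g2 ?t3D3 ?t3Z3. Qed.

Lemma lift2 G x y : bil G -> teq2 x y -> \sum_(p <- x) G p = \sum_(p <- y) G p.
Proof.
move=> [hl hr]; elim=> [s1 a b s2 st|a b pab|a b _ IH|a b c _ IH1 _ IH2].
- rewrite !big_cat /=; congr (_ + (_ + _)); case: st => *; rewrite !big_cons ?big_nil ?addr0.
  + by rewrite (hl _).1.
  + by rewrite (hr _).1.
  + by rewrite (hl _).2 (hr _).2.
  + by rewrite (lin0 (hl _)).
- exact: perm_big.
- by [].
- by rewrite IH1.
Qed.

Lemma lift3 G x y : tril G -> teq3 x y -> \sum_(p <- x) G p = \sum_(p <- y) G p.
Proof.
move=> [h1 h2 h3]; elim=> [s1 a b s2 st|a b pab|a b _ IH|a b c _ IH1 _ IH2].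
- rewrite !big_cat /=; congr (_ + (_ + _)); case: st => *; rewrite !big_cons ?big_nil ?addr0.
  + by rewrite (h1 _ _).1.
  + by rewrite (h2 _ _).1.
  + by rewrite (h3 _ _).1.
  + by rewrite (h1 _ _).2 (h2 _ _).2.
  + by rewrite (h1 _ _).2 (h3 _ _).2.
  + by rewrite (lin0 (h1 _ _)).
- exact: perm_big.
- by [].
- by rewrite IH1.
Qed.

End Q3.
Arguments t3 : simpl never.
Arguments sc : simpl never.
Arguments cls : simpl never.

Section Hopf.
Variables (k : fieldType) (H : algType k).
Variables (D : H -> seq (H * H)) (eps : H -> k) (S : H -> H).
Hypothesis HH : is_hopf D eps S.

Lemma hlin_S f : hlin f -> hlin (fun a => S (f a)).
Proof. by case=> h1 h2; split => *; rewrite ?h1 ?h2 ?(S_add HH) ?(S_scale HH). Qed.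

Lemma DL0 G : bil G -> lin (fun a => \sum_(q <- D a) G q).
Proof.
move=> hG; split => [a b|c a].
- by rewrite (lift2 hG (D_add HH a b)) big_cat.
- rewrite (lift2 hG (D_scale HH c a)) big_map sc_sum; apply: eq_bigr => -[p1 p2] _ /=.
  exact: (hG.1 p2).2.
Qed.

Lemma DL G f : bil G -> hlin f -> lin (fun a => \sum_(q <- D (f a)) G q).
Proof. by move=> hG hf; apply: (lin_comp (DL0 hG) hf). Qed.

Lemma Dmul G a b : bil G ->
  \sum_(q <- D (a * b)) G q = \sum_(q <- D a) \sum_(q' <- D b) G (q.1 * q'.1, q.2 * q'.2).
Proof. by move=> hG; rewrite (lift2 hG (D_mul HH a b)) /tmul2 big_allpairs_dep. Qed.

Lemma Done G : bil G -> \sum_(q <- D 1) G q = G (1, 1).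
Proof. by move=> hG; rewrite (lift2 hG (D_one HH)) big_seq1. Qed.

Lemma C1 G h : tril G ->
  \sum_(p <- D h) \sum_(q <- D p.1) G (q.1, q.2, p.2) =
  \sum_(p <- D h) \sum_(q <- D p.2) G (p.1, q.1, q.2).
Proof.
move=> hG; have := lift3 hG (D_coass HH h).
by rewrite /Dl /Dr !big_flatten /= !big_map; under eq_bigr do rewrite big_map;
   under [in RHS]eq_bigr do rewrite big_map.
Qed.

Lemma counit_rE f h : lin f -> \sum_(p <- D h) sc (eps p.2) (f p.1) = f h.
Proof.
move=> hf; rewrite -{2}(counit_r HH h) lin_sumE //; apply: eq_bigr => p _.
by rewrite hf.2.
Qed.
Lemma counit_lE f h : lin f -> \sum_(p <- D h) sc (eps p.1) (f p.2) = f h.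
Proof.
move=> hf; rewrite -{2}(counit_l HH h) lin_sumE //; apply: eq_bigr => p _.
by rewrite hf.2.
Qed.
Lemma antipode_lE f h : lin f -> \sum_(p <- D h) f (S p.1 * p.2) = sc (eps h) (f 1).
Proof. by move=> hf; rewrite -hf.2 -(antipode_l HH h) lin_sumE. Qed.
Lemma antipode_rE f h : lin f -> \sum_(p <- D h) f (p.1 * S p.2) = sc (eps h) (f 1).
Proof. by move=> hf; rewrite -hf.2 -(antipode_r HH h) lin_sumE. Qed.

Lemma hlin_S0 : hlin S.
Proof. by split => *; rewrite ?(S_add HH) ?(S_scale HH). Qed.
Lemma lin_G1 (G : H * H -> Q H) f y : bil G -> hlin f -> lin (fun a => G (f a, y)).
Proof. by move=> hG; apply: lin_comp (hG.1 y). Qed.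
Lemma lin_G2 (G : H * H -> Q H) f y : bil G -> hlin f -> lin (fun a => G (y, f a)).
Proof. by move=> hG; apply: lin_comp (hG.2 y). Qed.

Ltac hlin_tac := repeat first [ exact: hlin_id | exact: hlin_S0 | apply: hlin_mulr | apply: hlin_mull | apply: hlin_S ].
Ltac lin_tac := repeat first [ apply: lin_sum => ?
  | apply: DL; [split => ? /= | solve [hlin_tac]]
  | apply: lin_t3_1; solve [hlin_tac] | apply: lin_t3_2; solve [hlin_tac]
  | apply: lin_t3_3; solve [hlin_tac] | apply: lin_sc | apply: lin_add
  | apply: lin_G1; [eassumption | solve [hlin_tac]]
  | apply: lin_G2; [eassumption | solve [hlin_tac]]
  | apply: lin_comp; [eassumption | solve [hlin_tac]]
  | match goal with hh : _ |- _ => apply: hh end ].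
Ltac bil_tac := split => ? /=; lin_tac.
Ltac tril_tac := split => ? ? /=; lin_tac.
Ltac pg := match goal with |- ?g => idtac "GOAL:" g end.

Lemma DS G a : bil G -> \sum_(q <- D (S a)) G q = \sum_(q <- D a) G (S q.2, S q.1).
Proof.
move=> hG.
have hG1 := hG.1; have hG2 := hG.2.
set K := fun t : H * H * H => \sum_(s <- D t.1.1) \sum_(u <- D t.1.2) \sum_(w <- D (S t.2))
   G (S s.2 * u.1 * w.1, S s.1 * u.2 * w.2).
have hK : tril K.
  by rewrite /K; tril_tac.
have B : \sum_(p <- D a) \sum_(q <- D p.2) K (p.1, q.1, q.2) = \sum_(q <- D a) G (S q.2, S q.1).
  rewrite /K /=.
  have hPsi : lin (fun y => \sum_(q <- D y) G (S q.2, S q.1)) by lin_tac.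
  rewrite -(counit_rE (f := fun y => \sum_(q <- D y) G (S q.2, S q.1)) a hPsi).
  apply: eq_bigr => p _; rewrite exchange_big sc_sum; apply: eq_bigr => s _.
  transitivity (\sum_(q <- D p.2) \sum_(m <- D (q.1 * S q.2)) G (S s.2 * m.1, S s.1 * m.2)).
    apply: eq_bigr => q _; rewrite Dmul; last by bil_tac.
    by apply: eq_bigr => u _; apply: eq_bigr => w _; rewrite !mulrA.
  rewrite (antipode_rE (f := fun y => \sum_(m <- D y) G (S s.2 * m.1, S s.1 * m.2))); last by lin_tac.
  by rewrite Done ?mulr1 //; bil_tac.
have A : \sum_(p <- D a) \sum_(q <- D p.1) K (q.1, q.2, p.2) = \sum_(q <- D (S a)) G q.
  rewrite /K /=.
  have hPhi : lin (fun y => \sum_(q <- D (S y)) G q) by lin_tac.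
  rewrite -(counit_lE (f := fun y => \sum_(q <- D (S y)) G q) a hPhi).
  apply: eq_bigr => p _.
  rewrite (C1 (G := fun t => \sum_(u <- D t.2) \sum_(w <- D (S p.2))
       G (S t.1.2 * u.1 * w.1, S t.1.1 * u.2 * w.2))); last by tril_tac.
  rewrite /=.
  transitivity (\sum_(q <- D p.1) \sum_(w <- D (S p.2)) G (w.1, S q.1 * q.2 * w.2)).
    apply: eq_bigr => q _.
    rewrite -(C1 (G := fun t => \sum_(w <- D (S p.2)) G (S t.1.1 * t.1.2 * w.1, S q.1 * t.2 * w.2)));
      last by tril_tac.
    rewrite /=.
    transitivity (\sum_(s <- D q.2) sc (eps s.1) (\sum_(w <- D (S p.2)) G (w.1, S q.1 * s.2 * w.2))).
      apply: eq_bigr => s _; rewrite exchange_big sc_sum; apply: eq_bigr => w _.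
      rewrite (antipode_lE (f := fun m => G (m * w.1, S q.1 * s.2 * w.2))); last by lin_tac.
      by rewrite mul1r.
    by rewrite (counit_lE (f := fun m => \sum_(w <- D (S p.2)) G (w.1, S q.1 * m * w.2))) //; lin_tac.
  rewrite exchange_big sc_sum; apply: eq_bigr => w _.
  rewrite (antipode_lE (f := fun m => G (w.1, m * w.2))); last by lin_tac.
  by rewrite mul1r; case: w.
by rewrite -A C1 // B.
Qed.


Definition lin5 (F : H -> H -> H -> H -> H -> Q H) :=
  [/\ (forall b c d e, lin (fun a => F a b c d e)), (forall a c d e, lin (fun b => F a b c d e)),
      (forall a b d e, lin (fun c => F a b c d e)), (forall a b c e, lin (fun d => F a b c d e))
    & (forall a b c d, lin (fun e => F a b c d e))].

Lemma coass5 F h : lin5 F ->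
 \sum_(p <- D h) \sum_(q <- D p.1) \sum_(a <- D q.1) \sum_(c <- D p.2) F a.1 a.2 q.2 c.1 c.2 =
 \sum_(p <- D h) \sum_(q <- D p.1) \sum_(u <- D q.2) \sum_(v <- D u.1) F q.1 v.1 v.2 u.2 p.2.
Proof.
case=> hF1 hF2 hF3 hF4 hF5.
transitivity (\sum_(p <- D h) \sum_(q <- D p.1) \sum_(a <- D q.2) \sum_(c <- D p.2) F q.1 a.1 a.2 c.1 c.2).
  apply: eq_bigr => p _.
  by rewrite (C1 (G := fun t => \sum_(c <- D p.2) F t.1.1 t.1.2 t.2 c.1 c.2)) //; tril_tac.
rewrite (C1 (G := fun t => \sum_(a <- D t.1.2) \sum_(c <- D t.2) F t.1.1 a.1 a.2 c.1 c.2)) /=;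
  last by tril_tac.
rewrite (C1 (G := fun t => \sum_(u <- D t.1.2) \sum_(v <- D u.1) F t.1.1 v.1 v.2 u.2 t.2)) /=;
  last by tril_tac.
apply: eq_bigr => p _.
transitivity (\sum_(q <- D p.2) \sum_(a <- D q.2) \sum_(c <- D a.1) F p.1 q.1 c.1 c.2 a.2).
  rewrite (C1 (G := fun t => \sum_(c <- D t.2) F p.1 t.1.1 t.1.2 c.1 c.2)) /=; last by tril_tac.
  apply: eq_bigr => q _.
  by rewrite -(C1 (G := fun t => F p.1 q.1 t.1.1 t.1.2 t.2)) //; tril_tac.
symmetry.
transitivity (\sum_(q <- D p.2) \sum_(u <- D q.1) \sum_(v <- D u.2) F p.1 u.1 v.1 v.2 q.2).
  apply: eq_bigr => q _.
  by rewrite (C1 (G := fun t => F p.1 t.1.1 t.1.2 t.2 q.2)) //; tril_tac.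
by rewrite (C1 (G := fun t => \sum_(v <- D t.1.2) F p.1 t.1.1 v.1 v.2 t.2)) //; tril_tac.
Qed.


Variable R : seq (H * H).
Hypothesis HR1 : teq3 (Dl D R) [seq (r.1, r'.1, r.2 * r'.2) | r <- R, r' <- R].
Hypothesis HR5 : forall h, in_tensor2_r (@central k H) (nu S D R h).

Lemma Rsum G : tril G ->
  \sum_(p <- R) \sum_(q <- D p.1) G (q.1, q.2, p.2) = \sum_(r <- R) \sum_(r' <- R) G (r.1, r'.1, r.2 * r'.2).
Proof.
move=> hG; have := lift3 hG HR1.
rewrite /Dl big_flatten big_allpairs_dep /= big_map => <-.
by apply: eq_bigr => p _; rewrite big_map.
Qed.

Definition Good (m : Q H) := exists t : seq (H * H * H), (forall p, p \in t -> central p.1.2) /\ m = cls t.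

Lemma Good0 : Good 0.
Proof. by exists [::]. Qed.
Lemma GoodD m m' : Good m -> Good m' -> Good (m + m').
Proof.
move=> [t [ht ->]] [t' [ht' ->]]; exists (t ++ t'); split; last by rewrite cls_catE.
by move=> p; rewrite mem_cat => /orP [] ?; [apply: ht | apply: ht'].
Qed.
Lemma Good_sum I (s : seq I) F : (forall i, Good (F i)) -> Good (\sum_(i <- s) F i).
Proof.
move=> hF; elim: s => [|i s IH]; first by rewrite big_nil; exact: Good0.
by rewrite big_cons; apply: GoodD.
Qed.

Lemma Good_nu u v w g : Good (\sum_(p <- nu S D R g) t3 (u * p.1 * v) p.2 w).
Proof.
case: (HR5 g) => t [ht e].
rewrite (lift2 (G := fun p => t3 (u * p.1 * v) p.2 w) _ e); last by bil_tac.
exists [seq (u * p.1 * v, p.2, w) | p <- t]; split.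
  by move=> p /mapP [q /ht hq ->].
by rewrite -sum_t3 big_map.
Qed.


Lemma nuE g (F : H * H -> Q H) : \sum_(pp <- nu S D R g) F pp =
  \sum_(s <- R) \sum_(u <- D g) \sum_(v <- D u.1) \sum_(r' <- R)
     F (s.2 * v.2 * r'.2, S v.1 * S s.1 * u.2 * r'.1).
Proof.
rewrite /nu big_flatten big_map; apply: eq_bigr => s _.
rewrite big_allpairs_dep /D3 /Dl big_flatten big_map; apply: eq_bigr => u _.
by rewrite big_map.
Qed.

Lemma reord g (F : H * H -> H * H -> H * H -> H * H -> H * H -> H * H -> Q H) :
  \sum_(r <- R) \sum_(s' <- R) \sum_(s <- R) \sum_(u <- D g) \sum_(v <- D u.1) \sum_(r' <- R)
     F r s' s u v r' =
  \sum_(u <- D g) \sum_(v <- D u.1) \sum_(r <- R) \sum_(s <- R) \sum_(r' <- R) \sum_(s' <- R)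
     F r s' s u v r'.
Proof.
transitivity (\sum_(r <- R) \sum_(s <- R) \sum_(u <- D g) \sum_(v <- D u.1) \sum_(r' <- R) \sum_(s' <- R)
     F r s' s u v r').
  apply: eq_bigr => r _; rewrite exchange_big; apply: eq_bigr => s _.
  rewrite exchange_big; apply: eq_bigr => u _.
  rewrite exchange_big; apply: eq_bigr => v _.
  by rewrite exchange_big.
transitivity (\sum_(r <- R) \sum_(u <- D g) \sum_(v <- D u.1) \sum_(s <- R) \sum_(r' <- R) \sum_(s' <- R)
     F r s' s u v r').
  apply: eq_bigr => r _; rewrite exchange_big; apply: eq_bigr => u _.
  by rewrite exchange_big.
rewrite exchange_big; apply: eq_bigr => u _.
by rewrite exchange_big.
Qed.

Lemma mainQ h : Good (cls (Dr D (nu S D R h))).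
Proof.
have E0 : cls (Dr D (nu S D R h)) = \sum_(p <- nu S D R h) \sum_(q <- D p.2) t3 p.1 q.1 q.2.
  by rewrite -sum_t3 /Dr big_flatten big_map; apply: eq_bigr => p _; rewrite big_map.
have E1 : \sum_(p <- nu S D R h) \sum_(q <- D p.2) t3 p.1 q.1 q.2 =
  \sum_(r <- R) \sum_(x <- D3 D h) \sum_(r' <- R)
     \sum_(w <- D (S x.1.1 * S r.1 * x.2 * r'.1)) t3 (r.2 * x.1.2 * r'.2) w.1 w.2.
  by rewrite /nu big_flatten big_map; apply: eq_bigr => r _; rewrite big_allpairs_dep.
have E2 A r x r' : \sum_(w <- D (S x.1.1 * S r.1 * x.2 * r'.1)) t3 A w.1 w.2 =
  \sum_(a <- D x.1.1) \sum_(c <- D x.2) \sum_(b <- D r.1) \sum_(d <- D r'.1)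
     t3 A (S a.2 * S b.2 * c.1 * d.1) (S a.1 * S b.1 * c.2 * d.2).
  rewrite Dmul; last by bil_tac.
  rewrite Dmul; last by bil_tac.
  rewrite Dmul; last by bil_tac.
  rewrite DS; last by bil_tac.
  apply: eq_bigr => a _ /=; rewrite DS /=; last by bil_tac.
  by rewrite exchange_big.
pose Phi := fun (a1 a2 b c1 c2 : H) => \sum_(r <- R) \sum_(s <- R) \sum_(r' <- R) \sum_(s' <- R)
   t3 (r.2 * s.2 * b * (r'.2 * s'.2)) (S a2 * S s.1 * c1 * r'.1) (S a1 * S r.1 * c2 * s'.1).
have E3 : cls (Dr D (nu S D R h)) = \sum_(x <- D3 D h) \sum_(a <- D x.1.1) \sum_(c <- D x.2)
    Phi a.1 a.2 x.1.2 c.1 c.2.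
  rewrite E0 E1.
  under eq_bigr => r _ do under eq_bigr => x _ do under eq_bigr => r' _ do rewrite E2.
  rewrite exchange_big; apply: eq_bigr => x _.
  under eq_bigr => r _ do rewrite exchange_big.
  rewrite exchange_big; apply: eq_bigr => a _.
  under eq_bigr => r _ do rewrite exchange_big.
  rewrite exchange_big; apply: eq_bigr => c _.
  under eq_bigr => r _ do rewrite exchange_big.
  rewrite (Rsum (G := fun t => \sum_(i <- R) \sum_(d <- D i.1) t3 (t.2 * x.1.2 * i.2)
     (S a.2 * S t.1.2 * c.1 * d.1) (S a.1 * S t.1.1 * c.2 * d.2))) /=; last by tril_tac.
  apply: eq_bigr => r _; apply: eq_bigr => s _.
  by rewrite (Rsum (G := fun t => t3 (r.2 * s.2 * x.1.2 * t.2)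
     (S a.2 * S s.1 * c.1 * t.1.1) (S a.1 * S r.1 * c.2 * t.1.2))) //; tril_tac.
pose T := \sum_(p <- D h) \sum_(q <- D p.1) \sum_(r <- R) \sum_(s' <- R) \sum_(pp <- nu S D R q.2)
   t3 (r.2 * pp.1 * s'.2) pp.2 (S q.1 * S r.1 * p.2 * s'.1).
have GT : Good T.
  by do 4 (apply: Good_sum => ?); apply: Good_nu.
suff -> : cls (Dr D (nu S D R h)) = T by [].
rewrite E3 /D3 /Dl big_flatten big_map.
under eq_bigr => p _ do rewrite big_map /=.
rewrite coass5; last by rewrite /Phi; split => *; lin_tac.
rewrite /T /Phi; apply: eq_bigr => p _; apply: eq_bigr => q _.
under [in RHS]eq_bigr => r _ do under eq_bigr => s' _ do rewrite nuE.
rewrite reord.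
apply: eq_bigr => u _; apply: eq_bigr => v _; apply: eq_bigr => r _; apply: eq_bigr => s _.
apply: eq_bigr => r' _; apply: eq_bigr => s' _.
by rewrite /= !mulrA.
Qed.

End Hopf.

Unset Implicit Arguments.

Theorem lemma2p2 (k : fieldType) (H : algType k)
  (D : H -> seq (H * H)) (eps : H -> k) (S : H -> H) (R : seq (H * H)) :
  is_semiqt D eps S R ->
  forall h : H, in_tensor3_mid (central (H:=H)) (Dr D (nu S D R h)).
Proof.
move=> HQ h.
have [t [ht e]] := mainQ (sqt_hopf HQ) (sqt1 HQ) (sqt5 HQ) h.
by exists t; split => //; apply: cls_eqE.
Qed.
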